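(* Let $g(x)=1-(1-x^2)^4$ for $|x|\le1$ and $g(x)=1$ otherwise. Fix $0<p_o<\widetilde{p_o}<2$ and let $(q,p)$, respectively $(\widetilde q,\widetilde p)$, be the global solutions of $\dot q=p$, $\dot p=-g'(q)$ with initial data $(0,p_o)$, respectively $(0,\widetilde{p_o})$. Then: (i) if $p_o\in]0,\sqrt2[$, then $q(t)<\widetilde q(t)$ for all $t\in]0,\mathcal{T}(p_o)/2]$; (ii) if $p_o\in[\sqrt2,2[$, then $q(t)<\widetilde q(t)$ for all $t\in]0,+\infty[$.
   Context: For $p_o\in]0,\sqrt2[$, the solution $q$ of $\dot q=p$, $\dot p=-g'(q)$ with $(q(0),p(0))=(0,p_o)$ is periodic, and $\mathcal{T}(p_o)$ denotes its smallest period. *)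

(* Defs.v *)
From Stdlib Require Import Reals.
From Coquelicot Require Import Coquelicot.
Open Scope R_scope.

Definition g (x : R) : R :=
  if Rle_dec (Rabs x) 1 then 1 - (1 - x ^ 2) ^ 4 else 1.

Definition is_global_solution (q p : R -> R) (p0 : R) : Prop :=
  q 0 = 0 /\ p 0 = p0 /\
  forall t : R, is_derive q t (p t) /\ is_derive p t (- Derive g (q t)).

Definition min_period (f : R -> R) : R :=
  real (Glb_Rbar (fun T => 0 < T /\ forall t, f (t + T) = f t)).

(* Main.v *)
Require Import Defs.
From Stdlib Require Import Reals.
From Coquelicot Require Import Coquelicot.
From Stdlib Require Import Lra Psatz Classical.
Open Scope R_scope.


Lemma phi_der (k : nat) (u : R) :
  is_derive (fun u => (Rmax 0 u) ^ (S (S k))) u (INR (S (S k)) * (Rmax 0 u) ^ (S k)).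
Proof.
destruct (Rtotal_order u 0) as [Hu|[Hu|Hu]].
- apply is_derive_ext_loc with (f := fun _ => 0).
  + apply locally_interval with (a := m_infty) (b := Finite 0); simpl; auto.
    intros y _ Hy. rewrite Rmax_left by lra. simpl. ring.
  + rewrite Rmax_left by lra. rewrite pow_i by lia. rewrite Rmult_0_r.
    auto_derive; auto.
- subst u. apply is_derive_Reals. intros eps Heps.
  assert (He : 0 < Rmin 1 eps) by (apply Rmin_glb_lt; lra).
  exists (mkposreal _ He). intros h Hh0 Hh. simpl in Hh.
  assert (Hh1 : Rabs h < 1) by (eapply Rlt_le_trans; [exact Hh| apply Rmin_l]).
  assert (Hh2 : Rabs h < eps) by (eapply Rlt_le_trans; [exact Hh| apply Rmin_r]).
  rewrite Rplus_0_l, (Rmax_left 0 0) by lra.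
  replace (0 ^ S (S k)) with 0 by (simpl; ring). replace (0 ^ S k) with 0 by (simpl; ring). rewrite Rmult_0_r, !Rminus_0_r.
  destruct (Rle_dec h 0) as [Hn|Hp].
  + rewrite Rmax_left by lra. rewrite pow_i by lia. unfold Rdiv. rewrite Rmult_0_l, Rabs_R0. lra.
  + rewrite Rmax_right by lra.
    replace (h ^ S (S k) / h) with (h * h ^ k) by (simpl; field; lra).
    rewrite Rabs_mult. rewrite <- RPow_abs.
    assert (0 <= Rabs h) by apply Rabs_pos.
    assert (Rabs h ^ k <= 1) by (rewrite <- (pow1 k); apply pow_incr; lra).
    assert (0 <= Rabs h ^ k) by (apply pow_le; lra).
    nra.
- apply is_derive_ext_loc with (f := fun t => t ^ (S (S k))).
  + apply locally_interval with (a := Finite 0) (b := p_infty); simpl; auto.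
    intros y Hy _. rewrite Rmax_right by lra. reflexivity.
  + rewrite Rmax_right by lra.
    auto_derive; auto. rewrite Rmult_1_l. reflexivity.
Qed.

Definition mm (x : R) : R := Rmax 0 (1 - x ^ 2).
Definition ff (x : R) : R := 8 * x * mm x ^ 3.

Lemma mm_bounds x : 0 <= mm x <= 1.
Proof. unfold mm. split. apply Rmax_l. apply Rmax_lub. lra. nra. Qed.

Lemma mm_in x : x ^ 2 <= 1 -> mm x = 1 - x ^ 2.
Proof. intros. unfold mm. rewrite Rmax_right; lra. Qed.

Lemma mm_out x : 1 <= x ^ 2 -> mm x = 0.
Proof. intros. unfold mm. rewrite Rmax_left; lra. Qed.

Lemma g_mm x : g x = 1 - mm x ^ 4.
Proof.
unfold g. destruct (Rle_dec (Rabs x) 1) as [H|H].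
- rewrite mm_in. reflexivity.
  rewrite <- (pow2_abs x). assert (0 <= Rabs x) by apply Rabs_pos. nra.
- rewrite mm_out. simpl; ring.
  rewrite <- (pow2_abs x). nra.
Qed.

Lemma is_derive_R_ext (f g : R->R) x l l' : (forall t, f t = g t) -> l = l' -> is_derive f x l -> is_derive g x l'.
Proof. intros H E D; subst; apply (is_derive_ext f g); auto. Qed.

Lemma g_der x : is_derive g x (ff x).
Proof.
assert (H := phi_der 2 (1 - x^2)).
assert (H2 : is_derive (fun x => 1 - x^2) x (- (2 * x))) by (auto_derive; auto; ring).
assert (H3 := is_derive_comp _ _ x _ _ H H2).
assert (H4 := @is_derive_minus R_AbsRing R_NormedModule (fun _ => 1) _ x _ _ (is_derive_const 1 x) H3).
eapply is_derive_R_ext; [| | exact H4].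
- intros t. simpl. unfold minus, plus, opp; simpl. rewrite g_mm. unfold mm.
  replace (1 - t*(t*1)) with (1 - t^2) by ring. ring.
- unfold minus, plus, opp, zero, scal; simpl. unfold mult; simpl. unfold ff, mm.
  replace (1 - x*(x*1)) with (1 - x^2) by ring. ring.
Qed.

Lemma Derive_g x : Derive g x = ff x.
Proof. apply is_derive_unique, g_der. Qed.

Lemma der_cont F x l : is_derive F x l -> continuity_pt F x.
Proof. intros H. apply is_derive_Reals in H. apply derivable_continuous_pt. exists l. exact H. Qed.

Lemma mm3_der x : is_derive (fun x => mm x ^ 3) x (- 6 * x * mm x ^ 2).
Proof.
assert (H := phi_der 1 (1 - x^2)).
assert (H2 : is_derive (fun x => 1 - x^2) x (- (2 * x))) by (auto_derive; auto; ring).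
assert (H3 := is_derive_comp _ _ x _ _ H H2).
eapply is_derive_R_ext; [| | exact H3].
- intros t. reflexivity.
- unfold scal; simpl; unfold mult; simpl. unfold mm. replace (1 - x*(x*1)) with (1 - x^2) by ring. ring.
Qed.

Definition ffd x := 8 * mm x ^ 3 - 48 * x ^ 2 * mm x ^ 2.

Lemma ff_der x : is_derive ff x (ffd x).
Proof.
assert (H1 : is_derive (fun x => 8 * x) x 8) by (auto_derive; auto; ring).
assert (H := @is_derive_mult R_AbsRing _ _ x _ _ H1 (mm3_der x) (fun n m => Rmult_comm n m)).
eapply is_derive_R_ext; [| | exact H].
- intros t. unfold ff, mult; simpl. ring.
- unfold plus, mult; simpl. unfold ffd. ring.
Qed.

Lemma ffd_bound x : Rabs (ffd x) <= 56.
Proof.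
destruct (mm_bounds x) as [H0 H1].
assert (Hx : x ^ 2 * mm x ^ 2 <= 1).
{ destruct (Rle_dec (x^2) 1) as [H|H].
  - assert (0 <= x^2) by nra. assert (mm x ^ 2 <= 1) by nra. nra.
  - rewrite mm_out by lra. nra. }
assert (0 <= x ^ 2 * mm x ^ 2) by (assert (0 <= x^2) by nra; assert (0 <= mm x^2) by nra; nra).
assert (0 <= mm x ^ 3 <= 1) by (split; [apply pow_le; lra| rewrite <- (pow1 3); apply pow_incr; lra]).
unfold ffd. apply Rabs_le. nra.
Qed.

Lemma lip_from_der F F' L : (forall x, is_derive F x (F' x)) -> (forall x, Rabs (F' x) <= L) ->
  forall x y, Rabs (F x - F y) <= L * Rabs (x - y).
Proof.
intros HD HB x y.
destruct (MVT_gen F y x F') as [c [Hc E]].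
- intros; apply HD.
- intros; eapply der_cont; apply HD.
- rewrite E, Rabs_mult. apply Rmult_le_compat_r. apply Rabs_pos. apply HB.
Qed.

Lemma ff_lip x y : Rabs (ff x - ff y) <= 56 * Rabs (x - y).
Proof. apply lip_from_der with ffd. apply ff_der. apply ffd_bound. Qed.

Lemma mono_der F F' a b : a <= b -> (forall x, is_derive F x (F' x)) ->
  (forall x, a <= x <= b -> 0 <= F' x) -> F a <= F b.
Proof.
intros Hab HD HP.
destruct (MVT_gen F a b F') as [c [Hc E]].
- intros; apply HD.
- intros; eapply der_cont; apply HD.
- rewrite Rmin_left in Hc by lra. rewrite Rmax_right in Hc by lra.
  assert (0 <= F' c) by (apply HP; lra). nra.
Qed.

Lemma smono_der F F' a b : a < b -> (forall x, is_derive F x (F' x)) ->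
  (forall x, a <= x <= b -> 0 <= F' x) -> (forall x, a < x < b -> 0 < F' x) -> F a < F b.
Proof.
intros Hab HD HP HS.
set (m1 := (2*a+b)/3). set (m2 := (a+2*b)/3).
assert (F a <= F m1) by (apply (mono_der F F'); auto; unfold m1 in *; [lra| intros; apply HP; lra]).
assert (F m2 <= F b) by (apply (mono_der F F'); auto; unfold m2 in *; [lra| intros; apply HP; lra]).
destruct (MVT_gen F m1 m2 F') as [c [Hc E]].
- intros; apply HD.
- intros; eapply der_cont; apply HD.
- rewrite Rmin_left in Hc by (unfold m1, m2; lra). rewrite Rmax_right in Hc by (unfold m1,m2; lra).
  assert (0 < F' c) by (apply HS; unfold m1, m2 in *; lra).
  assert (m1 < m2) by (unfold m1, m2; lra). nra.
Qed.

Lemma const_der F : (forall x, is_derive F x 0) -> forall t, F t = F 0.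
Proof.
intros HD t.
destruct (MVT_gen F 0 t (fun _ => 0)) as [c [Hc E]].
- intros; apply HD.
- intros; eapply der_cont; apply HD.
- lra.
Qed.

Lemma sign_left F t l : is_derive F t l -> 0 < l ->
  exists d, 0 < d /\ forall s, t - d < s < t -> F s < F t.
Proof.
intros HD Hl. apply is_derive_Reals in HD. destruct (HD l Hl) as [d Hd].
exists d. split. apply cond_pos. intros s Hs.
assert (Hh : s - t <> 0) by lra.
assert (Hh2 : Rabs (s - t) < d) by (rewrite Rabs_left by lra; lra).
specialize (Hd _ Hh Hh2). replace (t + (s - t)) with s in Hd by ring.
set (r := (F s - F t) / (s - t)) in *.
assert (Er : F s - F t = r * (s - t)) by (unfold r; field; lra).
assert (0 < r) by (apply Rabs_def2 in Hd; lra).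
nra.
Qed.

Lemma sign_right F t l : is_derive F t l -> 0 < l ->
  exists d, 0 < d /\ forall s, t < s < t + d -> F t < F s.
Proof.
intros HD Hl. apply is_derive_Reals in HD. destruct (HD l Hl) as [d Hd].
exists d. split. apply cond_pos. intros s Hs.
assert (Hh : s - t <> 0) by lra.
assert (Hh2 : Rabs (s - t) < d) by (rewrite Rabs_right by lra; lra).
specialize (Hd _ Hh Hh2). replace (t + (s - t)) with s in Hd by ring.
set (r := (F s - F t) / (s - t)) in *.
assert (Er : F s - F t = r * (s - t)) by (unfold r; field; lra).
assert (0 < r) by (apply Rabs_def2 in Hd; lra).
nra.
Qed.

Lemma sign_left_neg F t l : is_derive F t l -> l < 0 ->
  exists d, 0 < d /\ forall s, t - d < s < t -> F t < F s.
Proof.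
intros HD Hl.
assert (HD' : is_derive (fun x => - F x) t (- l)).
{ apply is_derive_Reals in HD. apply is_derive_Reals.
  apply (derivable_pt_lim_opp F t l HD). }
destruct (sign_left _ _ _ HD') as [d [Hd H]]. lra.
exists d. split; auto. intros s Hs. specialize (H s Hs). lra.
Qed.

Lemma first_zero (D : R -> R) (b : R) : (forall x, continuity_pt D x) -> 0 < b -> D b <= 0 ->
  (exists d, 0 < d /\ forall s, 0 < s < d -> 0 < D s) ->
  exists c, 0 < c <= b /\ D c = 0 /\ forall s, 0 < s < c -> 0 < D s.
Proof.
intros HC Hb HDb [d [Hd HDd]].
set (E := fun s => 0 <= s <= b /\ forall u, 0 < u <= s -> 0 < D u).
assert (HB : bound E) by (exists b; intros s [Hs _]; lra).
assert (HE : exists x, E x) by (exists 0; split; [lra| intros; lra]).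
destruct (completeness E HB HE) as [c [Hub Hlub]].
assert (Hcb : c <= b) by (apply Hlub; intros s [Hs _]; lra).
assert (Hdb : d <= b).
{ destruct (Rle_dec d b); auto. assert (0 < D b) by (apply HDd; lra). lra. }
assert (Hc0 : d / 2 <= c).
{ apply Hub. split. lra. intros u Hu. apply HDd. lra. }
assert (Hbelow : forall s, 0 < s < c -> 0 < D s).
{ intros s Hs. destruct (Rlt_dec 0 (D s)) as [H|H]; auto. exfalso.
  assert (c <= s).
  { apply Hlub. intros e [He1 He2]. destruct (Rle_dec e s); auto.
    assert (0 < D s) by (apply He2; lra). lra. }
  lra. }
exists c. split. lra. split; auto.
destruct (Rtotal_order (D c) 0) as [Hn|[Hz|Hp]]; auto; exfalso.
- destruct (HC c (- D c) ltac:(lra)) as [a [Ha Hx]].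
  set (x := Rmax (c/2) (c - a/2)).
  assert (c/2 <= x) by apply Rmax_l. assert (c - a/2 <= x) by apply Rmax_r.
  assert (x < c) by (apply Rmax_lub_lt; lra).
  assert (0 < D x) by (apply Hbelow; lra).
  assert (Hd2 := Hx x). simpl in Hd2. unfold R_dist, D_x, no_cond in Hd2.
  assert (Hd3 : Rabs (D x - D c) < - D c).
  { apply Hd2. split. split. auto. lra. rewrite Rabs_left by lra. lra. }
  apply Rabs_def2 in Hd3. lra.
- destruct (Req_dec c b) as [Heq|Hne]. subst c. lra.
  destruct (HC c (D c) ltac:(lra)) as [a [Ha Hx]].
  set (c' := Rmin b (c + a/2)).
  assert (c' <= b) by apply Rmin_l. assert (c' <= c + a/2) by apply Rmin_r.
  assert (c < c') by (apply Rmin_glb_lt; lra).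
  assert (c' <= c).
  { apply Hub. split. lra. intros u Hu.
    destruct (Rlt_dec u c). apply Hbelow; lra.
    destruct (Req_dec u c). subst u; lra.
    assert (Hd2 := Hx u). simpl in Hd2. unfold R_dist, D_x, no_cond in Hd2.
    assert (Hd3 : Rabs (D u - D c) < D c).
    { apply Hd2. split. split. auto. lra. rewrite Rabs_right by lra. lra. }
    apply Rabs_def2 in Hd3. lra. }
  lra.
Qed.

Definition Sol (q p : R -> R) := forall t, is_derive q t (p t) /\ is_derive p t (- ff (q t)).

Lemma sol_of_global q p p0 : is_global_solution q p p0 -> Sol q p.
Proof. intros [_ [_ H]] t. destruct (H t) as [H1 H2]. rewrite Derive_g in H2. auto. Qed.

Lemma energy q p : Sol q p -> forall t, p t ^ 2 + 2 * g (q t) = p 0 ^ 2 + 2 * g (q 0).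
Proof.
intros HS.
apply (const_der (fun t => p t ^ 2 + 2 * g (q t))).
intros x. destruct (HS x) as [H1 H2].
assert (H3 := is_derive_comp g q x _ _ (g_der (q x)) H1).
assert (H4 := is_derive_pow p 2 x _ H2).
assert (H5 := @is_derive_plus R_AbsRing R_NormedModule _ _ x _ _ H4
   (is_derive_scal _ x 2 _ H3)).
eapply is_derive_R_ext; [| | exact H5].
- intros t. unfold plus, scal; simpl. unfold mult; simpl. ring.
- unfold plus, scal; simpl. unfold mult; simpl. ring.
Qed.

Lemma der_plus f h x df dh : is_derive f x df -> is_derive h x dh ->
  is_derive (fun t => f t + h t) x (df + dh).
Proof. intros H1 H2. exact (@is_derive_plus R_AbsRing R_NormedModule _ _ x _ _ H1 H2). Qed.

Lemma der_minus f h x df dh : is_derive f x df -> is_derive h x dh ->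
  is_derive (fun t => f t - h t) x (df - dh).
Proof. intros H1 H2. exact (@is_derive_minus R_AbsRing R_NormedModule _ _ x _ _ H1 H2). Qed.

Lemma der_mult f h x df dh : is_derive f x df -> is_derive h x dh ->
  is_derive (fun t => f t * h t) x (df * h x + f x * dh).
Proof. intros H1 H2. exact (@is_derive_mult R_AbsRing _ _ x _ _ H1 H2 (fun n m => Rmult_comm n m)). Qed.

Lemma der_opp f x df : is_derive f x df -> is_derive (fun t => - f t) x (- df).
Proof. intros H. exact (@is_derive_opp R_AbsRing R_NormedModule _ x _ H). Qed.

Lemma der_scal f x k df : is_derive f x df -> is_derive (fun t => k * f t) x (k * df).
Proof. intros; apply is_derive_scal; auto. Qed.

Lemma der_exp k x : is_derive (fun t => exp (k * t)) x (k * exp (k * x)).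
Proof. auto_derive; auto. ring. Qed.

Lemma abs_sq x : Rabs x * Rabs x = x * x.
Proof. rewrite <- Rabs_mult. apply Rabs_right. apply Rle_ge, Rle_0_sqr. Qed.

Lemma sumsq0 a b : a*a + b*b = 0 -> a = 0 /\ b = 0.
Proof.
intros H. pose proof (Rle_0_sqr a). pose proof (Rle_0_sqr b). unfold Rsqr in *.
assert (a*a = 0) by lra. assert (b*b = 0) by lra.
split; [destruct (Rmult_integral _ _ H2)| destruct (Rmult_integral _ _ H3)]; auto.
Qed.

Lemma bound_aux a b c : c*c <= 3136*(a*a) -> Rabs (2*a*b + 2*b*(-c)) <= 57*(a*a+b*b).
Proof.
intros Hc2.
assert (112*(b*c) <= 3136*(b*b) + c*c) by (pose proof (pow2_ge_0 (56*b-c)); nra).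
assert (-112*(b*c) <= 3136*(b*b) + c*c) by (pose proof (pow2_ge_0 (56*b+c)); nra).
assert (2*(a*b) <= a*a+b*b) by (pose proof (pow2_ge_0 (a-b)); nra).
assert (-2*(a*b) <= a*a+b*b) by (pose proof (pow2_ge_0 (a+b)); nra).
apply Rabs_le. split; lra.
Qed.

Lemma uniq_fwd q1 p1 q2 p2 t0 : Sol q1 p1 -> Sol q2 p2 -> q1 t0 = q2 t0 -> p1 t0 = p2 t0 ->
  forall t, (q1 t = q2 t /\ p1 t = p2 t).
Proof.
intros S1 S2 E1 E2.
set (u := fun t => (q1 t - q2 t) * (q1 t - q2 t) + (p1 t - p2 t) * (p1 t - p2 t)).
set (du := fun t => 2 * (q1 t - q2 t) * (p1 t - p2 t) + 2 * (p1 t - p2 t) * (- ff (q1 t) + ff (q2 t))).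
assert (Hu : forall t, is_derive u t (du t)).
{ intros t. destruct (S1 t) as [A1 B1]. destruct (S2 t) as [A2 B2].
  assert (HA := der_minus _ _ _ _ _ A1 A2).
  assert (HB := der_minus _ _ _ _ _ B1 B2).
  assert (H := der_plus _ _ _ _ _ (der_mult _ _ _ _ _ HA HA) (der_mult _ _ _ _ _ HB HB)).
  eapply is_derive_R_ext; [| | exact H]. intros; reflexivity. unfold du; simpl. ring. }
assert (Hb : forall t, Rabs (du t) <= 57 * u t).
{ intros t. unfold du, u.
  set (a := q1 t - q2 t). set (b := p1 t - p2 t). set (c := ff (q1 t) - ff (q2 t)).
  assert (Hc : Rabs c <= 56 * Rabs a) by apply ff_lip.
  assert (Hc2 : c * c <= 3136 * (a * a)).
  { assert (0 <= Rabs c) by apply Rabs_pos.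
    assert (Rabs c * Rabs c <= (56 * Rabs a) * (56 * Rabs a)) by (apply Rmult_le_compat; lra).
    rewrite abs_sq in H0.
    replace (56 * Rabs a * (56 * Rabs a)) with (3136 * (Rabs a * Rabs a)) in H0 by ring.
    rewrite abs_sq in H0. lra. }
  replace (- ff (q1 t) + ff (q2 t)) with (- c) by (unfold c; ring).
  apply bound_aux; auto. }
assert (Hu0 : forall t, 0 <= u t) by (intros; unfold u; apply Rplus_le_le_0_compat; apply Rle_0_sqr).
assert (Hut0 : u t0 = 0) by (unfold u; rewrite E1, E2; ring).
assert (Hall : forall t, u t = 0).
{ intros t. destruct (Rle_dec t0 t) as [Ht|Ht].
  - set (F := fun s => - (u s * exp (-57 * s))).
    assert (HF : forall s, is_derive F s (- (du s * exp (-57 * s) + u s * (-57 * exp (-57 * s))))).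
    { intros s. apply der_opp. apply (der_mult u (fun s => exp (-57 * s))). apply Hu. apply der_exp. }
    assert (F t0 <= F t).
    { apply (mono_der F _ t0 t Ht HF). intros x _.
      assert (0 < exp (-57 * x)) by apply exp_pos.
      assert (Hbx := Hb x). apply Rabs_le_between in Hbx. nra. }
    unfold F in H. rewrite Hut0 in H.
    assert (0 < exp (-57 * t)) by apply exp_pos. assert (0 <= u t) by auto. nra.
  - set (F := fun s => u s * exp (57 * s)).
    assert (HF : forall s, is_derive F s (du s * exp (57 * s) + u s * (57 * exp (57 * s)))).
    { intros s. apply (der_mult u (fun s => exp (57 * s))). apply Hu. apply der_exp. }
    assert (F t <= F t0).
    { apply (mono_der F _ t t0 ltac:(lra) HF). intros x _.
      assert (0 < exp (57 * x)) by apply exp_pos.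
      assert (Hbx := Hb x). apply Rabs_le_between in Hbx. nra. }
    unfold F in H. rewrite Hut0 in H.
    assert (0 < exp (57 * t)) by apply exp_pos. assert (0 <= u t) by auto. nra. }
intros t. specialize (Hall t). unfold u in Hall. apply sumsq0 in Hall. lra.
Qed.

Lemma g0 : g 0 = 0.
Proof. rewrite g_mm. rewrite mm_in by (simpl; lra). simpl. ring. Qed.

Lemma mm_pos x : 0 < mm x -> x ^ 2 < 1.
Proof. intros H. destruct (Rlt_dec (x^2) 1); auto. rewrite mm_out in H; lra. Qed.

Lemma mm_even x : mm (- x) = mm x.
Proof. unfold mm. f_equal. ring. Qed.

Lemma ff_odd x : ff (- x) = - ff x.
Proof. unfold ff. rewrite mm_even. ring. Qed.

Lemma pow4_le a b : 0 <= a -> 0 <= b -> a ^ 4 <= b ^ 4 -> a <= b.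
Proof.
intros Ha Hb H. destruct (Rle_dec a b) as [|Hn]; auto. exfalso.
assert (b < a) by lra.
assert (E : a^4 - b^4 = (a-b)*((a+b)*(a*a+b*b))) by ring.
assert (0 < (a+b)*(a*a+b*b)).
{ apply Rmult_lt_0_compat. lra. assert (0 < a*a) by nra. nra. }
assert (0 < (a-b)*((a+b)*(a*a+b*b))) by (apply Rmult_lt_0_compat; lra). lra.
Qed.

Lemma pow3_lt a b : 0 <= a -> a < b -> a ^ 3 < b ^ 3.
Proof.
intros Ha H. assert (E : b^3 - a^3 = (b-a)*(b*b+a*b+a*a)) by ring.
assert (0 < b*b+a*b+a*a) by nra.
assert (0 < (b-a)*(b*b+a*b+a*a)) by (apply Rmult_lt_0_compat; lra). lra.
Qed.

Lemma g_le x : g x <= 4 * x ^ 2.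
Proof.
rewrite g_mm. destruct (Rle_dec (x^2) 1) as [H|H].
- rewrite mm_in by auto. set (u := x^2) in *. assert (0 <= u) by (unfold u; nra).
  assert (E: 1 - (1-u)^4 = u * (4 - 6*u + 4*u^2 - u^3)) by ring. rewrite E.
  assert (4 - 6*u + 4*u^2 - u^3 <= 4) by nra. nra.
- rewrite mm_out by lra. simpl. lra.
Qed.

Lemma pos_near0 F : continuity_pt F 0 -> 0 < F 0 -> exists d, 0 < d /\ forall s, 0 < s < d -> 0 < F s.
Proof.
intros HC HF. destruct (HC (F 0) HF) as [a [Ha Hx]].
exists a. split. lra. intros s Hs.
assert (Hd2 := Hx s). simpl in Hd2. unfold R_dist, D_x, no_cond in Hd2.
assert (Hd3 : Rabs (F s - F 0) < F 0).
{ apply Hd2. split. split. auto. lra. rewrite Rminus_0_r, Rabs_right by lra. lra. }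
apply Rabs_def2 in Hd3. lra.
Qed.

Lemma sol_cont q p : Sol q p -> (forall x, continuity_pt q x) /\ (forall x, continuity_pt p x).
Proof. intros S; split; intros x; destruct (S x); eapply der_cont; eauto. Qed.

Lemma energy0 q p po : Sol q p -> q 0 = 0 -> p 0 = po -> forall t, p t ^ 2 + 2 * g (q t) = po ^ 2.
Proof. intros S H0 H1 t. rewrite (energy q p S t), H0, H1, g0. ring. Qed.

Lemma never_zero qt pt pto : Sol qt pt -> qt 0 = 0 -> pt 0 = pto -> 0 < pto -> 2 <= pto ^ 2 ->
  forall t, 0 <= t -> 0 < pt t.
Proof.
intros S H0 H1 Hp H2.
assert (NZ : forall c, pt c <> 0).
{ intros c Hc. assert (E := energy0 _ _ _ S H0 H1 c). rewrite Hc, g_mm in E.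
  destruct (mm_bounds (qt c)).
  assert (Hm : mm (qt c) ^ 4 <= 0) by (simpl in E; simpl; lra).
  assert (Hm0 : mm (qt c) = 0).
  { assert (0 <= mm (qt c) ^ 4) by (apply pow_le; lra).
    assert (mm (qt c) <= 0). apply pow4_le; try lra. simpl; simpl in Hm; lra. }
  set (x := qt c) in *.
  assert (Sx : Sol (fun _ => x) (fun _ => 0)).
  { intros t. split. auto_derive; auto. unfold ff. rewrite Hm0.
    replace (- (8 * x * 0 ^ 3)) with 0 by (simpl; ring). auto_derive; auto. }
  destruct (uniq_fwd _ _ _ _ c S Sx eq_refl (eq_trans Hc eq_refl) 0) as [E0 _].
  rewrite H0 in E0. rewrite <- E0 in Hm0. rewrite mm_in in Hm0 by (simpl; lra). simpl in Hm0. lra. }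
intros t Ht. destruct (Req_dec t 0) as [->|Ht0]. lra.
destruct (Rlt_dec 0 (pt t)) as [|Hn]; auto. exfalso.
destruct (sol_cont _ _ S) as [_ Cp].
destruct (first_zero pt t Cp ltac:(lra) ltac:(lra)) as [c [_ [Hc _]]].
{ apply pos_near0; auto. lra. }
exact (NZ c Hc).
Qed.

Lemma phase1 q p qt pt po pto b : Sol q p -> Sol qt pt -> q 0 = 0 -> qt 0 = 0 ->
  p 0 = po -> pt 0 = pto -> 0 < po -> po < pto ->
  (forall t, 0 <= t <= b -> 0 <= pt t) -> forall t, 0 < t <= b -> q t < qt t.
Proof.
intros S St H0 Ht0 H1 Ht1 Hpo Hlt Hpos t Ht.
destruct (Rlt_dec (q t) (qt t)) as [|Hn]; auto. exfalso.
set (D := fun s => qt s - q s).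
assert (HD : forall s, is_derive D s (pt s - p s)).
{ intros s. destruct (S s), (St s). apply der_minus; auto. }
destruct (first_zero D t) as [c [Hc [HDc Hbel]]].
- intros x; eapply der_cont; apply HD.
- lra.
- unfold D; lra.
- destruct (sign_right D 0 _ (HD 0)) as [d [Hd Hd2]]. lra.
  exists d. split; auto. intros s Hs. specialize (Hd2 s ltac:(lra)). unfold D in *. lra.
- assert (Hder : pt c - p c <= 0).
  { destruct (Rle_dec (pt c - p c) 0) as [|Hn2]; auto. exfalso.
    destruct (sign_left D c _ (HD c) ltac:(lra)) as [d [Hd Hd2]].
    set (s := Rmax (c/2) (c - d/2)).
    assert (c/2 <= s) by apply Rmax_l. assert (c - d/2 <= s) by apply Rmax_r.
    assert (s < c) by (apply Rmax_lub_lt; lra).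
    specialize (Hd2 s ltac:(lra)). specialize (Hbel s ltac:(lra)). lra. }
  assert (Eq : qt c = q c) by (unfold D in HDc; lra).
  assert (E1 := energy0 _ _ _ S H0 H1 c). assert (E2 := energy0 _ _ _ St Ht0 Ht1 c).
  rewrite Eq in E2.
  assert (0 <= pt c) by (apply Hpos; lra).
  assert (pt c ^ 2 > p c ^ 2) by nra.
  nra.
Qed.

Lemma large_case q p qt pt po pto : Sol q p -> Sol qt pt -> q 0 = 0 -> qt 0 = 0 ->
  p 0 = po -> pt 0 = pto -> 0 < po -> po < pto -> 2 <= pto ^ 2 ->
  forall t, 0 < t -> q t < qt t.
Proof.
intros S St H0 Ht0 H1 Ht1 Hpo Hlt H2 t Ht.
apply (phase1 q p qt pt po pto t); auto; try lra.
intros s Hs. left. apply (never_zero qt pt pto); auto; lra.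
Qed.

Lemma exists_Q q p po : Sol q p -> q 0 = 0 -> p 0 = po -> 0 < po -> po ^ 2 < 2 ->
  exists Q, 0 < Q /\ p Q = 0 /\ forall s, 0 <= s < Q -> 0 < p s.
Proof.
intros S H0 H1 Hpo H2.
destruct (sol_cont _ _ S) as [Cq Cp].
assert (Ex : exists t1, 0 < t1 /\ p t1 <= 0).
{ apply NNPP. intros Hn.
  assert (Hp : forall t, 0 <= t -> 0 < p t).
  { intros t Ht. destruct (Req_dec t 0) as [->|]. lra.
    destruct (Rlt_dec 0 (p t)); auto. exfalso. apply Hn. exists t. split; lra. }
  assert (Hq0 : forall t, 0 <= t -> 0 <= q t).
  { intros t Ht. rewrite <- H0. apply (mono_der q p); auto. intros x; apply S.
    intros x Hx. left; apply Hp; lra. }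
  assert (Hqm : forall a b, 0 <= a <= b -> q a <= q b).
  { intros a b Hab. apply (mono_der q p); try lra. intros x; apply S.
    intros x Hx. left; apply Hp; lra. }
  assert (Hff : forall t, 0 <= t -> 0 <= ff (q t)).
  { intros t Ht. unfold ff. destruct (mm_bounds (q t)). assert (0 <= q t) by auto.
    assert (0 <= mm (q t) ^ 3) by (apply pow_le; lra). 
    apply Rmult_le_pos; [lra| auto]. }
  assert (Hpm : forall a b, 0 <= a <= b -> p b <= p a).
  { intros a b Hab. assert (- p a <= - p b); [|lra].
    apply (mono_der (fun t => - p t) (fun t => ff (q t))). lra.
    - intros x. destruct (S x) as [_ Hx].
      eapply is_derive_R_ext; [| | apply der_opp; exact Hx]. intros t; reflexivity. apply Ropp_involutive.
    - intros x Hx. apply Hff; lra. }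
  set (b0 := po / 4). set (c0 := 1 - po ^ 2 / 2).
  assert (Hq1 : b0 < q 1).
  { destruct (Rlt_dec b0 (q 1)) as [|Hn1]; auto. exfalso.
    assert (Hlow : forall s, 0 <= s <= 1 -> po / 2 <= p s).
    { intros s Hs. assert (Hqs : 0 <= q s <= b0) by (split; [apply Hq0; lra| assert (q s <= q 1) by (apply Hqm; lra); lra]).
      assert (E := energy0 _ _ _ S H0 H1 s). assert (Hg := g_le (q s)).
      assert (q s ^ 2 <= b0 ^ 2) by (apply pow_incr; lra).
      assert (p s ^ 2 >= (po/2)^2) by (unfold b0 in *; nra).
      assert (0 < p s) by (apply Hp; lra). nra. }
    assert (q 0 + po / 2 * 1 <= q 1).
    { set (F := fun t => q t - po / 2 * t).
      assert (Hm : F 0 <= F 1).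
      { apply (mono_der F (fun t => p t - po / 2)). lra.
        intros x. apply der_minus. apply S. auto_derive; auto. ring.
        intros x Hx. specialize (Hlow x Hx). lra. }
      unfold F in Hm. lra. }
    unfold b0 in *. lra. }
  assert (Hc0 : 0 < c0) by (unfold c0; lra).
  set (m0 := 8 * b0 * c0).
  assert (Hm0 : 0 < m0) by (unfold m0, b0; apply Rmult_lt_0_compat; [lra| auto]).
  assert (Hffl : forall s, 1 <= s -> m0 <= ff (q s)).
  { intros s Hs. assert (Hqs : b0 <= q s) by (assert (q 1 <= q s) by (apply Hqm; lra); lra).
    assert (E := energy0 _ _ _ S H0 H1 s). rewrite g_mm in E.
    destruct (mm_bounds (q s)).
    assert (Hm4 : c0 <= mm (q s) ^ 4) by (unfold c0; nra).
    assert (mm (q s) ^ 4 <= mm (q s) ^ 3) by (simpl; assert (0 <= mm (q s) ^ 3) by (apply pow_le; lra); simpl in *; nra).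
    unfold ff, m0. assert (0 < b0) by (unfold b0; lra).
    assert (8 * b0 * c0 <= 8 * b0 * mm (q s) ^ 3) by (apply Rmult_le_compat_l; lra).
    assert (0 <= mm (q s) ^ 3) by (apply pow_le; lra).
    assert (8 * b0 * mm (q s) ^ 3 <= 8 * q s * mm (q s) ^ 3) by (apply Rmult_le_compat_r; lra).
    lra. }
  set (T1 := 2 + po / m0).
  assert (HT : p T1 <= p 1 - m0 * (T1 - 1)).
  { set (F := fun t => - p t - m0 * t).
    assert (Hm : F 1 <= F T1).
    { apply (mono_der F (fun t => ff (q t) - m0)).
      unfold T1. assert (0 < po / m0) by (apply Rdiv_lt_0_compat; lra). lra.
      intros x. destruct (S x) as [_ Hx]. eapply is_derive_R_ext; [| | apply der_minus; [apply der_opp; exact Hx| apply (der_scal (fun t => t) x m0); apply is_derive_id]].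
      intros t; unfold F; reflexivity. unfold one; simpl; ring.
      intros x Hx. specialize (Hffl x ltac:(lra)). lra. }
    unfold F in Hm. lra. }
  assert (p 1 <= po) by (rewrite <- H1; apply Hpm; lra).
  assert (m0 * (T1 - 1) = m0 + po) by (unfold T1; field; lra).
  assert (0 < p T1) by (apply Hp; unfold T1; assert (0 < po / m0) by (apply Rdiv_lt_0_compat; lra); lra).
  lra. }
destruct Ex as [t1 [Ht1 Hpt1]].
destruct (first_zero p t1 Cp Ht1 Hpt1) as [Q [HQ [HpQ Hbel]]].
{ apply pos_near0; auto. lra. }
exists Q. split. lra. split; auto. intros s Hs. destruct (Req_dec s 0) as [->|]. lra. apply Hbel; lra.
Qed.

Lemma der_reflect f a x df : is_derive f (a - x) df -> is_derive (fun t => f (a - t)) x (- df).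
Proof.
intros H.
assert (H2 : is_derive (fun t => a - t) x (-1)) by (auto_derive; auto; ring).
assert (H3 := is_derive_comp f (fun t => a - t) x _ _ H H2).
eapply is_derive_R_ext; [| | exact H3]; [intros; reflexivity| unfold scal; simpl; unfold mult; simpl; ring].
Qed.

Lemma sol_reflect q p a : Sol q p -> Sol (fun t => q (a - t)) (fun t => - p (a - t)).
Proof.
intros S t. destruct (S (a - t)) as [H1 H2]. split.
- apply der_reflect; auto.
- apply der_opp in H2. apply der_reflect in H2.
  eapply is_derive_R_ext; [| | exact H2]; [intros; reflexivity| simpl; ring].
Qed.

Lemma sol_neg q p : Sol q p -> Sol (fun t => - q t) (fun t => - p t).
Proof.
intros S t. destruct (S t) as [H1 H2]. split.
- apply der_opp; auto.
- apply der_opp in H2. eapply is_derive_R_ext; [| | exact H2]; [intros; reflexivity| simpl; rewrite ff_odd; ring].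
Qed.

Lemma sym_facts q p Q : Sol q p -> q 0 = 0 -> p Q = 0 ->
  (forall t, q (2 * Q - t) = q t) /\ (forall t, q (t + 4 * Q) = q t).
Proof.
intros S H0 HQ.
assert (R1 : forall t, q (2 * Q - t) = q t).
{ intros t. assert (S2 := sol_reflect q p (2 * Q) S).
  assert (E1 : q (2*Q - Q) = q Q) by (f_equal; ring).
  assert (E2 : - p (2*Q - Q) = p Q) by (replace (2*Q-Q) with Q by ring; rewrite HQ; ring).
  destruct (uniq_fwd _ _ _ _ Q S2 S E1 E2 t) as [E _]. exact E. }
assert (R2 : forall t, q (- t) = - q t).
{ intros t. assert (S2 := sol_neg _ _ (sol_reflect q p 0 S)).
  assert (E1 : - q (0 - 0) = q 0) by (rewrite Rminus_0_r, H0; ring).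
  assert (E2 : - - p (0 - 0) = p 0) by (rewrite Rminus_0_r; ring).
  destruct (uniq_fwd _ _ _ _ 0 S2 S E1 E2 t) as [E _].
  - simpl in E. replace (0 - t) with (- t) in E by ring. rewrite <- E. ring. }
split; auto.
intros t.
rewrite <- R1. replace (2 * Q - (t + 4 * Q)) with (- (t + 2 * Q)) by ring.
rewrite R2. rewrite <- R1. replace (2 * Q - (t + 2 * Q)) with (- t) by ring.
rewrite R2. ring.
Qed.

Lemma small_facts q p po Q : Sol q p -> q 0 = 0 -> p 0 = po -> 0 < po -> po ^ 2 < 2 ->
  0 < Q -> p Q = 0 -> (forall s, 0 <= s < Q -> 0 < p s) ->
  (forall s, 0 <= s <= Q -> 0 <= p s) /\
  (forall a b, 0 <= a < b -> b <= Q -> q a < q b) /\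
  0 < q Q /\ q Q ^ 2 < 1 /\ (1 - q Q ^ 2) ^ 4 = 1 - po ^ 2 / 2 /\
  (forall t, q t ^ 2 <= q Q ^ 2) /\
  (forall t, p t ^ 2 = 2 * ((1 - q t ^ 2) ^ 4 - (1 - q Q ^ 2) ^ 4)).
Proof.
intros S H0 H1 Hpo H2 HQ HpQ Hpos.
assert (Ha : forall s, 0 <= s <= Q -> 0 <= p s).
{ intros s Hs. destruct (Req_dec s Q) as [->|]. lra. left; apply Hpos; lra. }
assert (Hb : forall a b, 0 <= a < b -> b <= Q -> q a < q b).
{ intros a b Hab HbQ. apply (smono_der q p). lra. intros x; apply S.
  intros x Hx; apply Ha; lra. intros x Hx; apply Hpos; lra. }
assert (E := energy0 _ _ _ S H0 H1).
assert (HA0 : 0 < q Q) by (rewrite <- H0; apply Hb; lra).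
assert (Hin : forall t, 0 < mm (q t)).
{ intros t. specialize (E t). rewrite g_mm in E. destruct (mm_bounds (q t)).
  destruct (Rlt_dec 0 (mm (q t))) as [|Hn]; auto. assert (mm (q t) = 0) by lra.
  rewrite H4 in E. assert (0 <= p t ^ 2) by nra. simpl in E. lra. }
assert (Hmm : forall t, mm (q t) = 1 - q t ^ 2) by (intros; apply mm_in; left; apply mm_pos; auto).
assert (E' : forall t, p t ^ 2 + 2 * (1 - (1 - q t ^ 2) ^ 4) = po ^ 2).
{ intros t. rewrite <- Hmm, <- g_mm. apply E. }
assert (EQ := E' Q). rewrite HpQ in EQ.
assert (HA4 : (1 - q Q ^ 2) ^ 4 = 1 - po ^ 2 / 2) by (simpl in EQ; simpl; lra).
assert (HA1 : q Q ^ 2 < 1) by (apply mm_pos; auto).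
split; auto. split; auto. split; auto. split; auto. split; auto. split.
- intros t. assert (Hmt := Hin t). rewrite Hmm in Hmt.
  assert (1 - q Q ^ 2 <= 1 - q t ^ 2).
  { apply pow4_le; try lra. specialize (E' t). assert (0 <= p t ^ 2) by (apply pow2_ge_0). lra. }
  lra.
- intros t. specialize (E' t). lra.
Qed.
Lemma polyP (a b V : R) : 0 < a -> a < b -> b < 1 -> 0 <= V -> V < 1 ->
  6*(1+V) - 4*(a+b)*(1+V+V^2) + (a^2+a*b+b^2)*(1+V+V^2+V^3) > 0.
Proof. intros Ha Hab Hb HV0 HV1.
set (S2 := 1+V+V^2). set (S3 := 1+V+V^2+V^3). set (x := (a+b)/2).
assert (HS3 : S3 > 0) by (unfold S3; nra).
assert (Ht : a^2+a*b+b^2 >= 3*x^2) by (unfold x; nra).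
assert (H1 : (1-V)^2*(1+3*V) >= 0).
{ apply Rle_ge, Rmult_le_pos; [apply pow2_ge_0| lra]. }
assert (H2 : 8*S2 - 6*S3 > 0).
{ unfold S2, S3. assert (V^3 <= V^2) by nra. assert (V^2 <= V) by nra. nra. }
assert (Hx : 0 < x < 1) by (unfold x; lra).
assert (H3 : 8*S2 - 3*(1+x)*S3 > 0) by nra.
assert (E : 6*(1+V) - 8*x*S2 + 3*x^2*S3 = (1-V)^2*(1+3*V) + (1-x)*(8*S2 - 3*(1+x)*S3)) by (unfold S2,S3; ring).
assert (6*(1+V) - 8*x*S2 + 3*x^2*S3 > 0).
{ rewrite E. assert ((1-x)*(8*S2 - 3*(1+x)*S3) > 0) by (apply Rmult_gt_0_compat; lra). lra. }
replace (a+b) with (2*x) by (unfold x; field).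
assert ((a^2+a*b+b^2)*S3 >= 3*x^2*S3) by (apply Rle_ge, Rmult_le_compat_r; lra).
fold S2 S3. unfold S2, S3 in *. lra.
Qed.
Lemma polyK a b V : 0 < a -> a < b -> b < 1 -> 0 <= V -> V < 1 ->
  b * ((1 - a*V)^4 - (1-a)^4) > a * ((1 - b*V)^4 - (1-b)^4).
Proof.
intros. 
set (B := 6*(1+V) - 4*(a+b)*(1+V+V^2) + (a^2+a*b+b^2)*(1+V+V^2+V^3)).
assert (HB : B > 0) by (unfold B; apply polyP; auto).
assert (E : b * ((1 - a*V)^4 - (1-a)^4) - a * ((1 - b*V)^4 - (1-b)^4) = a*b*(1-V)*(b-a)*B) by (unfold B; ring).
assert (0 < a*b*(1-V)*(b-a)*B).
{ repeat apply Rmult_lt_0_compat; lra. }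
lra.
Qed.

Lemma speed_cmp A At pc ptc w : 0 < A -> A < At -> At ^ 2 < 1 -> 0 <= w < 1 -> 0 <= pc ->
  pc ^ 2 = 2 * ((1 - (A * w) ^ 2) ^ 4 - (1 - A ^ 2) ^ 4) ->
  ptc ^ 2 = 2 * ((1 - (At * w) ^ 2) ^ 4 - (1 - At ^ 2) ^ 4) ->
  ptc / At < pc / A.
Proof.
intros HA HAt HAt1 Hw Hpc E1 E2.
assert (HK := polyK (A^2) (At^2) (w^2) ltac:(nra) ltac:(nra) ltac:(nra) ltac:(nra) ltac:(nra)).
replace ((A*w)^2) with (A^2*w^2) in E1 by ring.
replace ((At*w)^2) with (At^2*w^2) in E2 by ring.
assert (H : (At * pc) ^ 2 > (A * ptc) ^ 2).
{ replace ((At*pc)^2) with (At^2 * pc^2) by ring. replace ((A*ptc)^2) with (A^2*ptc^2) by ring.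
  rewrite E1, E2. lra. }
assert (H2 : A * ptc < At * pc).
{ destruct (Rlt_dec (A * ptc) (At * pc)) as [|Hn]; auto. exfalso.
  assert (0 <= At * pc) by (apply Rmult_le_pos; lra). nra. }
apply (Rmult_lt_reg_r (A * At)). nra.
replace (ptc / At * (A * At)) with (A * ptc) by (field; lra).
replace (pc / A * (A * At)) with (At * pc) by (field; lra). lra.
Qed.

Lemma Q_lt q p qt pt po pto Q Qt : Sol q p -> Sol qt pt -> q 0 = 0 -> qt 0 = 0 ->
  p 0 = po -> pt 0 = pto -> 0 < po -> po < pto -> pto ^ 2 < 2 ->
  0 < Q -> p Q = 0 -> (forall s, 0 <= s < Q -> 0 < p s) ->
  0 < Qt -> pt Qt = 0 -> (forall s, 0 <= s < Qt -> 0 < pt s) -> Q < Qt.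
Proof.
intros S St H0 Ht0 H1 Ht1 Hpo Hlt H2 HQ HpQ Hpos HQt HptQ Hptpos.
assert (H2' : po ^ 2 < 2) by nra.
destruct (small_facts q p po Q S H0 H1 Hpo H2' HQ HpQ Hpos) as [Pa [Pb [PA0 [PA1 [PA4 [Pbd PE]]]]]].
destruct (small_facts qt pt pto Qt St Ht0 Ht1 ltac:(lra) H2 HQt HptQ Hptpos) as [Ta [Tb [TA0 [TA1 [TA4 [Tbd TE]]]]]].
set (A := q Q) in *. set (At := qt Qt) in *.
assert (HAAt : A < At).
{ assert (1 - At^2 < 1 - A^2).
  { destruct (Rlt_dec (1 - At^2) (1 - A^2)) as [|Hn]; auto. exfalso.
    assert (1 - A^2 <= 1 - At^2) by lra.
    assert ((1 - A^2)^4 <= (1 - At^2)^4) by (apply pow_incr; lra). nra. }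
  nra. }
destruct (Rlt_dec Q Qt) as [|Hn]; auto. exfalso.
assert (HQQ : Qt <= Q) by lra.
set (D := fun s => q s / A - qt s / At).
set (D' := fun s => p s / A - pt s / At).
assert (HD : forall s, is_derive D s (D' s)).
{ intros s. destruct (S s) as [Hq _]. destruct (St s) as [Hqt _].
  unfold D, D'. apply der_minus.
  - eapply is_derive_R_ext; [| | exact (der_scal q s (/A) _ Hq)]; [intros; simpl; field; lra| simpl; field; lra].
  - eapply is_derive_R_ext; [| | exact (der_scal qt s (/At) _ Hqt)]; [intros; simpl; field; lra| simpl; field; lra]. }
assert (Hqle : forall t, q t <= A).
{ intros t. specialize (Pbd t). destruct (Rle_dec (q t) A); auto. nra. }
assert (Hq0 : forall s, 0 <= s <= Q -> 0 <= q s).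
{ intros s Hs. destruct (Req_dec s 0) as [->|]. lra. left. rewrite <- H0. apply Pb; lra. }
assert (Hcmp : forall c, 0 <= c <= Qt -> q c < A -> D c = 0 -> 0 < D' c).
{ intros c Hc Hqc HDc.
  set (w := q c / A).
  assert (Hqcw : q c = A * w) by (unfold w; field; lra).
  assert (Hqtw : qt c = At * w) by (unfold D in HDc; unfold w; apply (Rmult_eq_reg_r (/At)); [| apply Rinv_neq_0_compat; lra];
     replace (At * (q c / A) * / At) with (q c / A) by (field; lra); lra).
  assert (Hw : 0 <= w < 1).
  { unfold w. split. apply Rdiv_le_0_compat; [apply Hq0; lra| lra].
    apply (Rmult_lt_reg_r A); [lra|]. replace (q c / A * A) with (q c) by (field; lra). lra. }
  assert (Hpc : 0 <= p c) by (apply Pa; lra).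
  assert (E1 := PE c). rewrite Hqcw in E1.
  assert (E2 := TE c). rewrite Hqtw in E2.
  assert (At ^ 2 < 1) by exact TA1.
  assert (Hs := speed_cmp A At (p c) (pt c) w PA0 HAAt TA1 Hw Hpc E1 E2).
  unfold D'. lra. }
assert (HD0 : D 0 = 0) by (unfold D; rewrite H0, Ht0; field; lra).
destruct (first_zero D Qt) as [c [Hc [HDc Hbel]]].
- intros x; eapply der_cont; apply HD.
- lra.
- unfold D. fold At. replace (At / At) with 1 by (field; lra).
  assert (q Qt / A <= 1).
  { apply (Rmult_le_reg_r A). lra. replace (q Qt / A * A) with (q Qt) by (field; lra). rewrite Rmult_1_l. apply Hqle. }
  lra.
- assert (HD'0 : 0 < D' 0) by (apply Hcmp; auto; lra).
  destruct (sign_right D 0 _ (HD 0) HD'0) as [d [Hd Hd2]].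
  exists d. split; auto. intros s Hs. specialize (Hd2 s ltac:(lra)). lra.
- assert (Hder : D' c <= 0).
  { destruct (Rle_dec (D' c) 0) as [|Hn2]; auto. exfalso.
    destruct (sign_left D c _ (HD c) ltac:(lra)) as [d [Hd Hd2]].
    set (s := Rmax (c/2) (c - d/2)).
    assert (c/2 <= s) by apply Rmax_l. assert (c - d/2 <= s) by apply Rmax_r.
    assert (s < c) by (apply Rmax_lub_lt; lra).
    specialize (Hd2 s ltac:(lra)). specialize (Hbel s ltac:(lra)). lra. }
  destruct (Rlt_dec (q c) A) as [Hlt2|Hge].
  + assert (0 < D' c) by (apply Hcmp; auto; lra). lra.
  + assert (HqcA : q c = A) by (specialize (Hqle c); lra).
    assert (Hpc0 : p c = 0).
    { assert (E1 := PE c). rewrite HqcA in E1. replace (2 * ((1 - A ^ 2) ^ 4 - (1 - A ^ 2) ^ 4)) with 0 in E1 by ring.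
      destruct (Req_dec (p c) 0) as [|Hne]; auto. exfalso. apply (pow_nonzero _ 2 Hne). lra. }
    assert (HcQ : Q <= c).
    { destruct (Rle_dec Q c); auto. assert (0 < p c) by (apply Hpos; lra). lra. }
    assert (Ec : c = Q) by lra. assert (EcQt : Qt = Q) by lra.
    assert (HD2 : is_derive D' Q (- ff (q Q) / A + ff (qt Q) / At)).
    { destruct (S Q) as [_ Hp]. destruct (St Q) as [_ Hpt].
      unfold D'. eapply is_derive_R_ext; [| | exact (der_minus _ _ _ _ _ (der_scal p Q (/A) _ Hp) (der_scal pt Q (/At) _ Hpt))].
      - intros; simpl; field; split; lra.
      - simpl; field; split; lra. }
    assert (Hneg : - ff (q Q) / A + ff (qt Q) / At < 0).
    { replace (qt Q) with At by (unfold At; rewrite EcQt; reflexivity). fold A. unfold ff.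
      rewrite (mm_in A) by lra. rewrite (mm_in At) by lra.
      replace (- (8 * A * (1 - A ^ 2) ^ 3) / A + 8 * At * (1 - At ^ 2) ^ 3 / At)
        with (8 * ((1 - At ^ 2) ^ 3 - (1 - A ^ 2) ^ 3)) by (field; lra).
      assert ((1 - At ^ 2) ^ 3 < (1 - A ^ 2) ^ 3) by (apply pow3_lt; nra).
      lra. }
    destruct (sign_left_neg D' Q _ HD2 Hneg) as [d [Hd Hd2]].
    assert (HD'Q : D' Q = 0) by (unfold D'; rewrite HpQ; rewrite <- EcQt, HptQ; field; lra).
    set (s0 := Rmax (Q/2) (Q - d/2)).
    assert (Q/2 <= s0) by apply Rmax_l. assert (Q - d/2 <= s0) by apply Rmax_r.
    assert (s0 < Q) by (apply Rmax_lub_lt; lra).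
    assert (Hlt3 : D s0 < D Q).
    { apply (smono_der D D'). lra. exact HD.
      - intros x Hx. destruct (Req_dec x Q) as [->|]. lra. left. specialize (Hd2 x ltac:(lra)). lra.
      - intros x Hx. specialize (Hd2 x ltac:(lra)). lra. }
    specialize (Hbel s0 ltac:(lra)). rewrite <- Ec in Hlt3. lra.
Qed.

Lemma min_period_le q P : 0 < P -> (forall t, q (t + P) = q t) -> 0 <= min_period q <= P.
Proof.
intros HP HPer. unfold min_period.
destruct (Glb_Rbar_correct (fun T => 0 < T /\ forall t, q (t + T) = q t)) as [Hlb Hglb].
assert (H1 : Rbar_le (Glb_Rbar (fun T => 0 < T /\ forall t, q (t + T) = q t)) P).
{ apply Hlb. split; auto. }
assert (H2 : Rbar_le 0 (Glb_Rbar (fun T => 0 < T /\ forall t, q (t + T) = q t))).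
{ apply Hglb. intros x [Hx _]. simpl. lra. }
destruct (Glb_Rbar (fun T => 0 < T /\ forall t, q (t + T) = q t)) as [r| |]; simpl in *; try contradiction.
lra.
Qed.

Theorem lemma5p15 (po pto : R) (q p qt pt : R -> R) :
  0 < po -> po < pto -> pto < 2 ->
  is_global_solution q p po ->
  is_global_solution qt pt pto ->
  ((0 < po < sqrt 2) ->
     forall t : R, 0 < t <= min_period q / 2 -> q t < qt t) /\
  ((sqrt 2 <= po < 2) ->
     forall t : R, 0 < t -> q t < qt t).
Proof.
intros Hpo Hlt Hlt2 G Gt.
assert (S := sol_of_global _ _ _ G). assert (St := sol_of_global _ _ _ Gt).
destruct G as [H0 [H1 _]]. destruct Gt as [Ht0 [Ht1 _]].
assert (Hs2 : sqrt 2 * sqrt 2 = 2) by (apply sqrt_sqrt; lra).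
split.
- intros [_ Hsq] t Ht.
  assert (Hpo2 : po ^ 2 < 2).
  { assert (po * po < sqrt 2 * sqrt 2) by (apply Rmult_le_0_lt_compat; lra). simpl. lra. }
  destruct (Rle_dec 2 (pto ^ 2)) as [Hbig|Hsmall].
  + apply (large_case q p qt pt po pto); auto; lra.
  + assert (Hpt2 : pto ^ 2 < 2) by lra.
    destruct (exists_Q q p po S H0 H1 Hpo Hpo2) as [Q [HQ [HpQ Hpos]]].
    destruct (exists_Q qt pt pto St Ht0 Ht1 ltac:(lra) Hpt2) as [Qt [HQt [HptQ Hptpos]]].
    assert (HQQ := Q_lt q p qt pt po pto Q Qt S St H0 Ht0 H1 Ht1 Hpo Hlt Hpt2 HQ HpQ Hpos HQt HptQ Hptpos).
    destruct (sym_facts q p Q S H0 HpQ) as [R1 R2].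
    destruct (sym_facts qt pt Qt St Ht0 HptQ) as [T1 _].
    assert (Hmp := min_period_le q (4 * Q) ltac:(lra) R2).
    assert (Ht2 : t <= 2 * Q) by lra.
    destruct (small_facts qt pt pto Qt St Ht0 Ht1 ltac:(lra) Hpt2 HQt HptQ Hptpos) as [Ta [Tb _]].
    assert (Ph := phase1 q p qt pt po pto Qt S St H0 Ht0 H1 Ht1 Hpo Hlt Ta).
    destruct (Rle_dec t Qt) as [Hle|Hgt].
    * apply Ph; lra.
    * set (s := 2 * Q - t). set (s' := 2 * Qt - t).
      assert (E1 : q t = q s) by (unfold s; rewrite R1; reflexivity).
      assert (E2 : qt t = qt s') by (unfold s'; rewrite T1; reflexivity).
      assert (Hss : q s <= qt s).
      { destruct (Req_dec s 0) as [Hs0|Hs0].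
        - rewrite Hs0, H0, Ht0. lra.
        - left. apply Ph. unfold s in *; lra. }
      assert (qt s < qt s') by (apply Tb; unfold s, s'; lra).
      lra.
- intros [Hsq _] t Ht.
  assert (2 <= pto ^ 2).
  { assert (sqrt 2 * sqrt 2 <= pto * pto) by (apply Rmult_le_compat; try lra; apply sqrt_pos). simpl. lra. }
  apply (large_case q p qt pt po pto); auto; lra.
Qed.
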